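(* Let $d'\subseteq\{1,\dots,\mathrm{dim}\}$, let $w$ and $w_1,\dots,w_{\mathrm{dim}}$ be positive integers with $w_i\le w$, and let the dataset be $X=\{(a_1,\dots,a_{\mathrm{dim}}): a_i\in\mathbb{N},\ a_i\le w_i\}$. Let $H$ be the class of line trees of height less than $d$ in which every node tests one of the dimensions in $d'$, different from the dimensions tested by all of its ancestors. Then for a classifier $h$ that assigns the same label to all data points, the disagreement coefficient $\theta_h$ (with respect to $H$ on $X$) is $O\big((3\ln w)^d\big)$.
   Context: A line tree is a decision tree (each internal node compares one coordinate with a threshold, each leaf carries a label in $\{0,1\}$) in which every internal node has at least one child that is a leaf, and all leaves except the deepest one carry the same label while the deepest leaf carries the opposite label. With $n=|X|$: $D(h,h')=\frac1n\sum_{x\in X}\mathbb{I}(h(x)\ne h'(x))$, $B_H(h,r)=\{h'\in H:D(h,h')\le r\}$, $\mathrm{DIS}(V)=\{x\in X:\exists h_1,h_2\in V,h_1(x)\ne h_2(x)\}$, and $\theta_h=\sup_{r>0}\frac{|\mathrm{DIS}(B_H(h,r))|}{rn}$. *)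

(* Defs.v *)
From HB Require Import structures.
From mathcomp Require Import all_boot all_order all_algebra.
From mathcomp Require Import all_classical all_reals all_analysis.
Set Implicit Arguments. Unset Strict Implicit. Unset Printing Implicit Defensive.
Import Order.TTheory GRing.Theory Num.Theory.
Local Open Scope ring_scope.

(* Dimensions are indexed 0..dim-1 by 'I_dim (the paper uses 1..dim).      *)
Definition datapoint (dim w : nat) := {ffun 'I_dim -> 'I_w.+1}.

Definition dataset (dim w : nat) (w_ : 'I_dim -> nat) : {set datapoint dim w} :=
  [set a : datapoint dim w | [forall i, (a i <= w_ i)%N]].

(* Binary decision trees: internal nodes compare one coordinate with a
   (real) threshold; x goes to the left child iff x_j <= t. *)
Inductive dtree (R : realType) (dim : nat) :=
| Leaf of bool
| Node of 'I_dim & R & dtree R dim & dtree R dim.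
Arguments Leaf {R dim}.
Arguments Node {R dim}.

Fixpoint eval_tree (R : realType) (dim w : nat) (tr : dtree R dim)
  (x : datapoint dim w) : bool :=
  match tr with
  | Leaf b => b
  | Node j t l r => if ((x j : nat)%:R <= t) then eval_tree l x else eval_tree r x
  end.

Fixpoint height (R : realType) (dim : nat) (tr : dtree R dim) : nat :=
  match tr with
  | Leaf _ => 0
  | Node _ _ l r => (maxn (height l) (height r)).+1
  end.

(* line_tree_lab c tr : every internal node has a leaf child, all leaves
   except the deepest one carry label c, and the deepest leaf carries ~~ c. *)
Fixpoint line_tree_lab (R : realType) (dim : nat) (c : bool) (tr : dtree R dim)
  : Prop :=
  match tr with
  | Leaf b => b = ~~ c
  | Node _ _ l r =>
      (l = Leaf c /\ line_tree_lab c r) \/ (r = Leaf c /\ line_tree_lab c l)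
  end.

Definition line_tree (R : realType) (dim : nat) (tr : dtree R dim) : Prop :=
  exists c, line_tree_lab c tr.

Fixpoint tests_ok (R : realType) (dim : nat) (d' : {set 'I_dim})
  (anc : seq 'I_dim) (tr : dtree R dim) : Prop :=
  match tr with
  | Leaf _ => True
  | Node j _ l r =>
      j \in d' /\ j \notin anc /\ tests_ok d' (j :: anc) l /\ tests_ok d' (j :: anc) r
  end.

Definition Hclass (R : realType) (dim w : nat) (d' : {set 'I_dim}) (d : nat)
  : set (datapoint dim w -> bool) :=
  [set h | exists tr : dtree R dim,
      [/\ line_tree tr, (height tr < d)%N, tests_ok d' [::] tr & h = eval_tree tr]].

Section Disagreement.
Variables (R : realType) (dim w : nat) (X : {set datapoint dim w}).

Definition dist (h h' : datapoint dim w -> bool) : R :=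
  #|[set x in X | h x != h' x]|%:R / #|X|%:R.

Definition ball (H : set (datapoint dim w -> bool)) (h : datapoint dim w -> bool) (r : R)
  : set (datapoint dim w -> bool) :=
  [set h' | H h' /\ dist h h' <= r].

Definition DIS (V : set (datapoint dim w -> bool)) : {set datapoint dim w} :=
  [set x in X | `[< exists h1 h2, [/\ V h1, V h2 & h1 x != h2 x] >]].

Definition theta (H : set (datapoint dim w -> bool)) (h : datapoint dim w -> bool) : \bar R :=
  ereal_sup [set ((#|DIS (ball H h r)|%:R / (r * #|X|%:R))%:E) | r in [set r : R | 0 < r]].

End Disagreement.

(* Main.v *)
Require Import Defs.
From HB Require Import structures.
From mathcomp Require Import all_boot all_order all_algebra.
From mathcomp Require Import all_classical all_reals all_analysis.
Import Order.TTheory GRing.Theory Num.Theory.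
Local Open Scope ring_scope.

From mathcomp Require Import zify.
From Stdlib Require Import Lia.


Lemma card_family_prod (A B : finType) (F : A -> pred B) :
  #|[set y : {ffun A -> B} | y \in family F]| = (\prod_j #|F j|)%N.
Proof.
rewrite cardsE. have -> := card_family F.
by rewrite foldrE big_map big_enum.
Qed.

Lemma card_le_interval (T : finType) (A : {pred T}) (f : T -> nat) lo n :
  {in A &, injective f} -> (forall x, x \in A -> (lo <= f x < lo + n)%N) ->
  (#|A| <= n)%N.
Proof.
move=> inj Hr; rewrite cardE -(size_map f) -(size_iota lo n).
apply: uniq_leq_size.
  by rewrite map_inj_in_uniq ?enum_uniq // => x y; rewrite !mem_enum; apply: inj.
by move=> _ /mapP [x Hx ->]; rewrite mem_iota; apply: Hr; rewrite -mem_enum.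
Qed.

Lemma card_ge_interval (T : finType) (A : {pred T}) (g : nat -> T) lo n :
  (forall a c, (lo <= a)%N -> (a < lo + n)%N -> (lo <= c)%N -> (c < lo + n)%N -> g a = g c -> a = c) ->
  (forall i, (lo <= i)%N -> (i < lo + n)%N -> g i \in A) ->
  (n <= #|A|)%N.
Proof.
move=> inj Hr; rewrite cardE -{1}(size_iota lo n) -(size_map g).
apply: uniq_leq_size.
  rewrite map_inj_in_uniq ?iota_uniq // => x y; rewrite !mem_iota => /andP [? ?] /andP [? ?].
  by apply: inj.
by move=> _ /mapP [x Hx ->]; rewrite mem_enum; move: Hx; rewrite mem_iota => /andP [? ?]; apply: Hr.
Qed.

Lemma card_cover (T I : finType) (P : pred I) (A : {set T}) (B : I -> {set T}) :
  (forall x, x \in A -> exists2 i, P i & x \in B i) ->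
  (#|A| <= \sum_(i | P i) #|B i|)%N.
Proof.
move=> H; apply: (@leq_trans #|\bigcup_(i | P i) B i|).
  apply: subset_leq_card; apply/fintype.subsetP => x /H [i Pi Hi].
  by apply/bigcupP; exists i.
pose K := fun (U : {set T}) (n : nat) => is_true (#|U| <= n)%N.
apply: (@big_rec2 _ _ K); first by rewrite /K cards0.
move=> i U n _; rewrite /K => Hn; rewrite cardsU; apply: leq_trans (leq_subr _ _) _.
by rewrite leq_add2l.
Qed.

Definition cndc (b : bool) (xj yj : nat) : bool := if b then (yj <= xj)%N else (xj <= yj)%N.

Lemma path_box (R : realType) dim w (d' : {set 'I_dim}) (tr : dtree R dim)
  (anc : seq 'I_dim) (x : datapoint dim w) (b : bool) :
  tests_ok d' anc tr -> eval_tree tr x != b ->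
  exists (J : {set 'I_dim}) (s : {ffun 'I_dim -> bool}),
   [/\ (forall j, j \in J -> j \notin anc), (#|J| <= height tr)%N &
       forall y : datapoint dim w, (forall j, j \in J -> cndc (s j) (x j) (y j)) ->
         eval_tree tr y != b].
Proof.
elim: tr anc => [b' | j t l IHl r IHr] anc /=.
  move=> _ H; exists finset.set0, [ffun=> true]; split => //.
  - by move=> j; rewrite finset.in_set0.
  - by rewrite cards0.
move=> [jd [janc [okl okr]]].
have Hanc : forall (J : {set 'I_dim}), (forall i, i \in J -> i \notin j :: anc) ->
   forall i, i \in j |: J -> i \notin anc.
  move=> J HJ i; rewrite in_setU1 => /orP [/eqP -> // | /HJ].
  by rewrite in_cons negb_or => /andP [_ ->].
have Hcard : forall (J : {set 'I_dim}) hh, (#|J| <= hh)%N -> (#|j |: J| <= hh.+1)%N.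
  move=> J hh H; rewrite cardsU1; case: (j \in J) => //=.
  by apply: leq_trans H _.
have HjJ : forall (J : {set 'I_dim}), (forall i, i \in J -> i \notin j :: anc) -> j \notin J.
  by move=> J HJ; apply/negP => /HJ; rewrite mem_head.
case: ifP => Hx Hev.
  have [J [s [HJ HcJ Hy]]] := IHl _ okl Hev.
  exists (j |: J), [ffun i => if i == j then true else s i]; split.
  - exact: Hanc.
  - by apply: Hcard; apply: leq_trans HcJ (leq_maxl _ _).
  move=> y Hc.
  have Hyj : (y j <= x j)%N by have := Hc j (setU11 j J); rewrite /cndc ffunE eqxx.
  rewrite ifT; last by apply: le_trans Hx; rewrite ler_nat.
  apply: Hy => i Hi; have := Hc i (setU1r j Hi); rewrite ffunE.
  case: eqP => // Eij; subst i; by rewrite (negbTE (HjJ _ HJ)) in Hi.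
have [J [s [HJ HcJ Hy]]] := IHr _ okr Hev.
exists (j |: J), [ffun i => if i == j then false else s i]; split.
- exact: Hanc.
- by apply: Hcard; apply: leq_trans HcJ (leq_maxr _ _).
move=> y Hc.
have Hyj : (x j <= y j)%N by have := Hc j (setU11 j J); rewrite /cndc ffunE eqxx.
rewrite ifF; last first.
  apply/negbTE; rewrite -ltNge; apply: (lt_le_trans _ (_ : (x j : nat)%:R <= _)).
    by rewrite ltNge Hx.
  by rewrite ler_nat.
apply: Hy => i Hi; have := Hc i (setU1r j Hi); rewrite ffunE.
case: eqP => // Eij; subst i; by rewrite (negbTE (HjJ _ HJ)) in Hi.
Qed.

Set Implicit Arguments. Unset Strict Implicit. Unset Printing Implicit Defensive.

Definition aw dim (w_ : 'I_dim -> nat) (s : {ffun 'I_dim -> bool}) (j : 'I_dim) (z : nat) : nat :=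
  if s j then z.+1 else ((w_ j).+1 - z)%N.
Definition lv dim (w_ : 'I_dim -> nat) (J : {set 'I_dim}) s j z : nat :=
  if j \in J then trunc_log 2 (aw w_ s j z) else 0%N.
Definition cw dim (w_ : 'I_dim -> nat) (J : {set 'I_dim}) j l : nat :=
  if j \in J then (2 ^ l)%N else (w_ j).+1.
Definition bxF dim w (w_ : 'I_dim -> nat) (J : {set 'I_dim}) (s : {ffun 'I_dim -> bool})
  (x : datapoint dim w) j : pred 'I_w.+1 :=
  [pred z : 'I_w.+1 | (z <= w_ j)%N && ((j \in J) ==> cndc (s j) (x j) z)].
Definition bx dim w (w_ : 'I_dim -> nat) J s (x : datapoint dim w) : {set datapoint dim w} :=
  [set y : datapoint dim w | y \in family (bxF w_ J s x)].
Definition clF dim w (w_ : 'I_dim -> nat) (J : {set 'I_dim}) (s : {ffun 'I_dim -> bool}) K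
  (lam : {ffun 'I_dim -> 'I_K}) j : pred 'I_w.+1 :=
  [pred z : 'I_w.+1 | (z <= w_ j)%N && ((j \in J) ==> (lv w_ J s j z == lam j))].
Definition cls dim w (w_ : 'I_dim -> nat) J s K (lam : {ffun 'I_dim -> 'I_K}) : {set datapoint dim w} :=
  [set y : datapoint dim w | y \in family (clF w_ J s lam)].

Lemma inord_inj_lt (n a c : nat) : (a < n.+1)%N -> (c < n.+1)%N ->
  inord a = inord c :> 'I_n.+1 -> a = c.
Proof. by move=> Ha Hc /(congr1 (@nat_of_ord _)); rewrite !inordK. Qed.

Lemma aw_pos dim (w_ : 'I_dim -> nat) s j (z : nat) : (z <= w_ j)%N -> (0 < aw w_ s j z)%N.
Proof. by rewrite /aw; case: (s j) => // H; rewrite subn_gt0 ltnS. Qed.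

Lemma aw_le dim (w_ : 'I_dim -> nat) s j (z : nat) : (aw w_ s j z <= (w_ j).+1)%N \/ ~~ (z <= w_ j)%N.
Proof.
rewrite /aw; case: (s j); last by left; apply: leq_subr.
by case: (leqP z (w_ j)) => H; [left | right].
Qed.

Lemma bx_ge dim w (w_ : 'I_dim -> nat) J s (x : datapoint dim w) :
  (forall i, w_ i <= w)%N -> x \in dataset w w_ ->
  (\prod_j cw w_ J j (lv w_ J s j (x j)) <= #|bx w_ J s x|)%N.
Proof.
move=> Hw; rewrite inE => /forallP Hx.
rewrite /bx card_family_prod; apply: leq_prod => j _.
have Hxj := Hx j.
rewrite /cw /lv; case: ifP => jJ; rewrite ?jJ.
  apply: (@leq_trans (aw w_ s j (x j))).
    by apply: trunc_logP => //; apply: aw_pos.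
  rewrite /aw; case Esj: (s j).
    apply: (@card_ge_interval _ _ (fun i => inord i) 0 (x j).+1).
      move=> a c; rewrite add0n => _ Ha _ Hc; apply: inord_inj_lt.
        by apply: leq_trans Ha _; rewrite ltnS; apply: leq_trans Hxj _.
      by apply: leq_trans Hc _; rewrite ltnS; apply: leq_trans Hxj _.
    move=> i; rewrite add0n => _ Hi.
    have Hiw : (i < w.+1)%N by apply: leq_trans Hi _; rewrite ltnS; apply: leq_trans Hxj _.
    rewrite inE /= /cndc jJ Esj inordK //=.
    have Hix : (i <= x j)%N by rewrite -ltnS.
    by rewrite Hix (leq_trans Hix Hxj).
  apply: (@card_ge_interval _ _ (fun i => inord i) (x j) ((w_ j).+1 - x j)).
    move=> a c; rewrite subnKC ?(leqW Hxj) // => _ Ha _ Hc.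
    by apply: inord_inj_lt; [apply: leq_trans Ha _ | apply: leq_trans Hc _]; rewrite ltnS.
  move=> i; rewrite subnKC ?(leqW Hxj) // => H1 H2.
  have Hiw : (i < w.+1)%N by apply: leq_trans H2 _; rewrite ltnS.
  by rewrite inE /= /cndc jJ Esj inordK //= -ltnS H2.
apply: (@card_ge_interval _ _ (fun i => inord i) 0 (w_ j).+1).
  move=> a c; rewrite add0n => _ Ha _ Hc.
  by apply: inord_inj_lt; [apply: leq_trans Ha _ | apply: leq_trans Hc _]; rewrite ltnS.
move=> i; rewrite add0n => _ Hi; have Hiw : (i < w.+1)%N by apply: leq_trans Hi _; rewrite ltnS.
by rewrite inE /= jJ inordK //= -ltnS Hi.
Qed.

Lemma cls_le dim w (w_ : 'I_dim -> nat) J s K (lam : {ffun 'I_dim -> 'I_K}) :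
  (#|cls w w_ J s lam| <= \prod_j cw w_ J j (lam j))%N.
Proof.
rewrite /cls card_family_prod; apply: leq_prod => j _.
rewrite /cw; case: ifP => jJ.
  apply: (@card_le_interval _ _ (fun z : 'I_w.+1 => aw w_ s j z) (2 ^ lam j) (2 ^ lam j)).
    move=> a c; rewrite !inE /= jJ /= => /andP [Ha _] /andP [Hc _].
    rewrite /aw; case: (s j) => [[] /val_inj // | H]; apply: val_inj.
    move: H Ha Hc; clear; rewrite /=; move: (nat_of_ord a) (nat_of_ord c) => a0 c0; lia.
  move=> z; rewrite inE /= jJ /= /lv jJ => /andP [Hz /eqP Hl].
  have := trunc_log_bounds (isT : (1 < 2)%N) (aw_pos s Hz).
  by rewrite Hl /= expnS mul2n -addnn.
apply: (@card_le_interval _ _ (fun z : 'I_w.+1 => val z) 0 (w_ j).+1).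
  by move=> a c _ _; apply: val_inj.
by move=> z; rewrite inE /= jJ andbT ltnS.
Qed.

Definition Sset (R : realType) dim w (w_ : 'I_dim -> nat) J s (T : R) : {set datapoint dim w} :=
  [set x in dataset w w_ | (#|bx w_ J s x|%:R <= T)].

Lemma S_card (R : realType) dim w (w_ : 'I_dim -> nat) J s (T : R) :
  (forall i, w_ i <= w)%N -> 0 <= T ->
  #|Sset w w_ J s T|%:R <= ((trunc_log 2 w.+1).+1 ^ #|J|)%:R * T.
Proof.
move=> Hw T0.
set K := (trunc_log 2 w.+1).+1.
pose Lam := [set lam : {ffun 'I_dim -> 'I_K} |
   lam \in family (fun j => [pred l : 'I_K | (j \in J) || (l == ord0)])].
have cardL : #|Lam| = (K ^ #|J|)%N.
  rewrite card_family_prod -prod_nat_const [RHS]big_mkcond /=.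
  apply: eq_bigr => j _; case: (j \in J) => /=.
    by rewrite -[RHS](card_ord K); apply: eq_card => l.
  apply: (@eq_trans _ _ #|pred1 (@ord0 (K.-1))|); last by apply: card1.
  by apply: eq_card => l; rewrite !inE.
have cover : (#|Sset w w_ J s T| <= \sum_(lam | lam \in Lam) #|Sset w w_ J s T :&: cls w w_ J s lam|)%N.
  apply: card_cover => x Hx.
  have HxX : x \in dataset w w_ by move: Hx; rewrite inE => /andP [].
  have Hxj : forall j, (x j <= w_ j)%N by move: HxX; rewrite inE => /forallP.
  have HlvK : forall j, (lv w_ J s j (x j) < K)%N.
    move=> j; rewrite /lv; case: (j \in J) => //.
    rewrite ltnS; apply: leq_trunc_log.
    have [|] := aw_le w_ s j (x j); last by rewrite Hxj.
    by move=> H; apply: leq_trans H _; rewrite ltnS.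
  exists [ffun j => inord (lv w_ J s j (x j))].
    rewrite inE; apply/familyP => j; rewrite inE ffunE.
    case jJ: (j \in J) => //=; apply/eqP; apply: val_inj => /=.
    by rewrite inordK /lv jJ.
  rewrite inE Hx inE; apply/familyP => j; rewrite inE /= ffunE Hxj /= inordK //.
  by apply/implyP => _.
apply: (@le_trans _ _ (\sum_(lam | lam \in Lam) T)).
  apply: (@le_trans _ _ (\sum_(lam | lam \in Lam) #|Sset w w_ J s T :&: cls w w_ J s lam|)%N%:R).
    by rewrite ler_nat.
  rewrite natr_sum; apply: ler_sum => lam _.
  case: (set_0Vmem (Sset w w_ J s T :&: cls w w_ J s lam)) => [-> | [x0 Hx0]].
    by rewrite cards0.
  move: (Hx0); rewrite inE => /andP [HS Hc].
  move: HS; rewrite inE => /andP [HX HT].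
  apply: le_trans HT; rewrite ler_nat.
  apply: leq_trans (subset_leq_card (subsetIr _ _)) _.
  apply: leq_trans (@cls_le _ _ _ _ _ _ lam) _.
  apply: leq_trans (@bx_ge _ _ _ _ s _ Hw HX).
  rewrite leq_eqVlt; apply/orP; left; apply/eqP.
  apply: eq_bigr => j _; rewrite /cw; case jJ: (j \in J) => //.
  move: Hc; rewrite inE => /familyP /(_ j); rewrite inE /= jJ /= => /andP [_ /eqP ->].
  by [].
by rewrite sumr_const cardL mulr_natl.
Qed.

Unset Implicit Arguments. Set Strict Implicit.

Lemma K_bound (R : realType) (w : nat) : (2 <= w)%N ->
  ((trunc_log 2 w.+1).+1)%:R * ln (2 : R) <= 3 * ln (w%:R : R).
Proof.
move=> w2.
set s0 := trunc_log 2 w.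
have s0pos : (0 < s0)%N by rewrite trunc_log_gt0.
have Ht : (trunc_log 2 w.+1 <= s0.+1)%N.
  rewrite -[X in (_ <= X)%N](@trunc_expnK 2) //; apply: leq_trunc_log.
  by apply: trunc_log_ltn.
have HK : ((trunc_log 2 w.+1).+1 <= 3 * s0)%N.
  by apply: leq_trans (_ : (s0.+2 <= 3 * s0)%N); [rewrite ltnS | move: s0pos; clear; lia].
have ln2 : 0 < ln (2 : R) by apply: ln_gt0; rewrite ltr1n.
apply: (@le_trans _ _ ((3 * s0)%N%:R * ln (2 : R))).
  by rewrite ler_wpM2r ?(ltW ln2) // ler_nat.
rewrite natrM -mulrA ler_wpM2l // mulr_natl -lnXn; last by rewrite ltr0n.
rewrite ler_ln ?posrE ?exprn_gt0 ?ltr0n ?(leq_trans _ w2) //.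
by rewrite -natrX ler_nat; apply: trunc_logP => //; apply: leq_trans w2.
Qed.

Theorem proposition1 (R : realType) (dim : nat) (d' : {set 'I_dim}) (d : nat) :
  exists (C : R) (W0 : nat),
  forall (w : nat) (w_ : 'I_dim -> nat),
    (W0 <= w)%N -> (0 < w)%N ->
    (forall i, (0 < w_ i)%N && (w_ i <= w)%N) ->
    forall h : datapoint dim w -> bool,
      (exists b : bool, forall x, x \in @dataset dim w w_ -> h x = b) ->
      (@theta R dim w (@dataset dim w w_) (@Hclass R dim w d' d) h
        <= (C * (3 * ln (w%:R : R)) ^+ d)%:E)%E.
Proof.
set P := #|{: {set 'I_dim} * {ffun 'I_dim -> bool}}|.
exists (P%:R / (ln (2 : R)) ^+ d), 2%N.
move=> w w_ w2 w0 Hw_ h [b hb].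
have Hw : forall i, (w_ i <= w)%N by move=> i; have /andP [] := Hw_ i.
set X := dataset w w_.
set n := #|X|.
have n0 : (0 < n)%N.
  rewrite card_gt0; apply/set0Pn; exists [ffun=> ord0]; rewrite inE.
  by apply/forallP => i; rewrite ffunE.
set K := (trunc_log 2 w.+1).+1.
apply: ge_ereal_sup => _ [r /= r0 <-]; rewrite lee_fin.
have rn0 : 0 < r * n%:R by rewrite mulr_gt0 // ltr0n.
have key : (#|@DIS dim w X (@Defs.ball R dim w X (@Hclass R dim w d' d) h r)| <=
    \sum_(p : {set 'I_dim} * {ffun 'I_dim -> bool} | (#|p.1| < d)%N) #|Sset w w_ p.1 p.2 (r * n%:R)|)%N.
  apply: card_cover => x.
  rewrite inE => /andP [xX /asboolP [h1 [h2 [B1 B2 Hne]]]].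
  have [h' [[Hh' Hd] Hx]] : exists h', @Defs.ball R dim w X (@Hclass R dim w d' d) h r h' /\ h' x != b.
    case E1: (h1 x == b).
      by exists h2; split => //; rewrite (eqP E1) eq_sym in Hne.
    by exists h1; split => //; rewrite E1.
  case: Hh' => tr [_ Hht Hok Eh']; subst h'.
  have [J [s [_ HJ Hy]]] := @path_box R dim w d' tr [::] x b Hok Hx.
  exists (J, s); first by apply: leq_ltn_trans HJ Hht.
  rewrite inE xX /=.
  have Hd' : #|[set y in X | h y != eval_tree tr y]|%:R <= r * n%:R.
    by rewrite -ler_pdivrMr // ltr0n.
  apply: le_trans Hd'; rewrite ler_nat; apply: subset_leq_card.
  apply/fintype.subsetP => y; rewrite inE => /familyP Hyf.
  have yX : y \in X.
    by rewrite inE; apply/forallP => j; have := Hyf j; rewrite inE => /andP [].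
  rewrite inE yX (hb y yX) /= eq_sym; apply: Hy => j jJ.
  by have := Hyf j; rewrite inE jJ /= => /andP [].
have Kpos : (0 < K)%N by [].
have main : #|@DIS dim w X (@Defs.ball R dim w X (@Hclass R dim w d' d) h r)|%:R <= (P * K ^ d)%N%:R * (r * n%:R).
  apply: (le_trans (_ : _ <= (\sum_(p : {set 'I_dim} * {ffun 'I_dim -> bool} | (#|p.1| < d)%N) #|Sset w w_ p.1 p.2 (r * n%:R)|)%N%:R)).
    by rewrite ler_nat.
  rewrite natr_sum.
  apply: (@le_trans _ _ (\sum_(p : {set 'I_dim} * {ffun 'I_dim -> bool} | (#|p.1| < d)%N) ((K ^ d)%N%:R * (r * n%:R)))).
    apply: ler_sum => p Hp; apply: le_trans (@S_card R dim w w_ p.1 p.2 (r * n%:R) Hw (ltW rn0)) _.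
    rewrite ler_wpM2r ?(ltW rn0) // ler_nat leq_pexp2l //; exact: ltnW.
  rewrite big_mkcond /=.
  apply: (@le_trans _ _ (\sum_(p in {: {set 'I_dim} * {ffun 'I_dim -> bool}}) ((K ^ d)%N%:R * (r * n%:R)))).
    apply: ler_sum => p _; case: ifP => // _.
    by rewrite mulr_ge0 // ltW.
  by rewrite sumr_const (_ : #|_| = P) // natrM -mulrA mulr_natl mulr_natl.

rewrite ler_pdivrMr //; apply: le_trans main _.
rewrite -/n ler_wpM2r ?(ltW rn0) //.
have ln2 : 0 < ln (2 : R) by apply: ln_gt0; rewrite ltr1n.
have HK : K%:R <= 3 * ln (w%:R : R) / ln 2 by rewrite ler_pdivlMr //; apply: K_bound.
rewrite natrM -mulrA ler_wpM2l // natrX [_^-1 * _]mulrC -expr_div_n.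
have [-> | dpos] := posnP d; first by rewrite !expr0.
rewrite ler_pXn2r // nnegrE //.
by apply: le_trans HK.
Qed.
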